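(* Let $P,P'\subset\mathbb{R}^d$ be polytopes, each inscribed into a sphere centered at the origin, with the same normal fan $\mathcal{N}(P)=\mathcal{N}(P')$. If some point $v$ is a vertex of both $P$ and $P'$ with the same normal cone $N_vP=N_vP'$, then $P=P'$. That is, an inscribed polytope with inscribing sphere centered at the origin is completely determined by its normal fan and a single vertex.
   Context: For a polytope $P$ and $c\in\mathbb{R}^d$, $P^c$ is the face maximizing $\langle c,x\rangle$. The normal cone of a face $F$ is $N_FP=\{c: F\subseteq P^c\}$; the normal fan $\mathcal{N}(P)$ is the collection of all normal cones of faces of $P$. *)

(* Defs.v *)
From HB Require Import structures.
From mathcomp Require Import all_boot all_order all_algebra.
From mathcomp Require Import boolp classical_sets reals.
Set Implicit Arguments. Unset Strict Implicit. Unset Printing Implicit Defensive.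
Import Order.TTheory GRing.Theory Num.Theory.
Local Open Scope ring_scope.
Local Open Scope classical_set_scope.

Section Polytopes.
Variables (R : realType) (d : nat).
Notation pt := 'rV[R]_d.

Definition dotv (c x : pt) : R := \sum_(i < d) c 0 i * x 0 i.

Definition conv (V : seq pt) : set pt :=
  [set x | exists w : 'I_(size V) -> R,
     [/\ forall i, 0 <= w i, \sum_i w i = 1 & x = \sum_i w i *: V`_i]].

Definition is_polytope (P : set pt) : Prop := exists V : seq pt, P = conv V.

Definition face_max (P : set pt) (c : pt) : set pt :=
  [set x | P x /\ forall y, P y -> dotv c y <= dotv c x].

Definition is_face (P : set pt) (F : set pt) : Prop := exists c, F = face_max P c.

Definition normal_cone (P : set pt) (F : set pt) : set pt :=
  [set c | F `<=` face_max P c].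

Definition normal_fan (P : set pt) : set (set pt) :=
  [set N | exists F, is_face P F /\ N = normal_cone P F].

Definition is_vertex (P : set pt) (v : pt) : Prop :=
  exists c, face_max P c = [set v].

(* inscribed in a sphere centered at the origin: all vertices have the same
   (squared) Euclidean norm *)
Definition inscribed0 (P : set pt) : Prop :=
  exists r : R, forall v, is_vertex P v -> dotv v v = r.

End Polytopes.

(* Main.v *)
From HB Require Import structures.
From mathcomp Require Import all_boot all_order all_algebra.
From mathcomp Require Import boolp classical_sets reals.
Require Import Defs.
From mathcomp Require Import ring lra zify.
Set Implicit Arguments. Unset Strict Implicit. Unset Printing Implicit Defensive.
Import Order.TTheory GRing.Theory Num.Theory.
Local Open Scope ring_scope.
Local Open Scope classical_set_scope.
Section Dot.
Variables (R : realType) (d : nat).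
Notation pt := 'rV[R]_d.
Implicit Types (c x y : pt).

Lemma dotvC c x : dotv c x = dotv x c.
Proof. by apply: eq_bigr => i _; rewrite mulrC. Qed.
Lemma dotvDr c x y : dotv c (x + y) = dotv c x + dotv c y.
Proof. by rewrite /dotv -big_split; apply: eq_bigr => i _; rewrite mxE mulrDr. Qed.
Lemma dotvZr c (k : R) x : dotv c (k *: x) = k * dotv c x.
Proof. by rewrite /dotv mulr_sumr; apply: eq_bigr => i _; rewrite mxE mulrCA. Qed.
Lemma dotvDl c x y : dotv (x + y) c = dotv x c + dotv y c.
Proof. by rewrite dotvC dotvDr dotvC (dotvC y). Qed.
Lemma dotvZl c (k : R) x : dotv (k *: x) c = k * dotv x c.
Proof. by rewrite dotvC dotvZr dotvC. Qed.
Lemma dotv0r c : dotv c 0 = 0.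
Proof. by rewrite -(scale0r 0) dotvZr mul0r. Qed.
Lemma dotv0l c : dotv 0 c = 0.
Proof. by rewrite dotvC dotv0r. Qed.
Lemma dotvNr c x : dotv c (- x) = - dotv c x.
Proof. by rewrite -scaleN1r dotvZr mulN1r. Qed.
Lemma dotvNl c x : dotv (- x) c = - dotv x c.
Proof. by rewrite dotvC dotvNr dotvC. Qed.
Lemma dotvBr c x y : dotv c (x - y) = dotv c x - dotv c y.
Proof. by rewrite dotvDr dotvNr. Qed.
Lemma dotvBl c x y : dotv (x - y) c = dotv x c - dotv y c.
Proof. by rewrite dotvDl dotvNl. Qed.
Lemma dotv_sumr c n (F : 'I_n -> pt) :
  dotv c (\sum_(i < n) F i) = \sum_(i < n) dotv c (F i).
Proof.
elim/big_rec2: _ => [|i y1 y2 _ H]; first by rewrite dotv0r.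
by rewrite dotvDr H.
Qed.
Lemma dotv_comb c n (w : 'I_n -> R) (F : 'I_n -> pt) :
  dotv c (\sum_(i < n) w i *: F i) = \sum_(i < n) w i * dotv c (F i).
Proof. by rewrite dotv_sumr; apply: eq_bigr => i _; rewrite dotvZr. Qed.
Lemma dotv_ge0 x : 0 <= dotv x x.
Proof. by apply: sumr_ge0 => i _; rewrite -expr2 sqr_ge0. Qed.
Lemma dotv_eq0 x : dotv x x = 0 -> x = 0.
Proof.
move=> H; apply/rowP => i; rewrite mxE.
have H0 : forall j : 'I_d, true -> 0 <= x 0 j * x 0 j.
  by move=> j _; rewrite -expr2 sqr_ge0.
have := @psumr_eq0P _ _ _ _ H0 H i isT.
by move/eqP; rewrite mulf_eq0 orbb => /eqP.
Qed.
End Dot.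
Section Dot2.
Variables (R : realType) (d : nat).
Lemma dotv_subsq (x y : 'rV[R]_d) :
  dotv (x - y) (x - y) = dotv x x - 2 * dotv x y + dotv y y.
Proof. rewrite !dotvBl !dotvBr (dotvC y x); ring. Qed.
End Dot2.
Section Farkas.
Variables (R : realType) (d : nat).
Notation pt := 'rV[R]_d.

Definition prv (c : pt) (g : R) (v : pt) (t : R) := dotv c v + g * t.

Lemma prv_comb c g k1 v1 t1 k2 v2 t2 :
  prv c g (k1 *: v1 - k2 *: v2) (k1 * t1 - k2 * t2) =
  k1 * prv c g v1 t1 - k2 * prv c g v2 t2.
Proof. rewrite /prv dotvBr !dotvZr; ring. Qed.

Lemma prv_combl c g c' g' k v t :
  prv (c' - k *: c) (g' - k * g) v t = prv c' g' v t - k * prv c g v t.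
Proof. rewrite /prv dotvBl dotvZl; ring. Qed.

Lemma farkas n : forall (a : 'I_n -> pt) (s : 'I_n -> R) (bx : pt) (bt : R),
  ~ (exists l : 'I_n -> R, [/\ forall i, 0 <= l i,
        bx = \sum_i l i *: a i & bt = \sum_i l i * s i]) ->
  exists (c : pt) (g : R), (forall i, prv c g (a i) (s i) <= 0) /\
                           0 < prv c g bx bt.
Proof.
elim: n => [|n IH] a s bx bt Hn.
  exists bx, bt; split; first by case.
  rewrite /prv; have [bxe|bx0] := eqVneq bx 0.
    subst bx; have bt0 : bt != 0.
      apply/eqP => bt0; apply: Hn; exists (fun _ => 0).
      by split; [move=> ?; exact: lexx | by rewrite big_ord0 | by rewrite big_ord0 bt0].
    by rewrite dotv0r add0r -expr2 exprn_even_gt0.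
  have h1 : 0 < dotv bx bx.
    rewrite lt_def dotv_ge0 andbT; apply/eqP => /dotv_eq0 /eqP.
    by rewrite (negbTE bx0).
  by apply: (lt_le_trans h1); rewrite lerDl -expr2 sqr_ge0.
pose a' i := a (lift ord0 i); pose s' i := s (lift ord0 i).
have Hn' : ~ (exists l : 'I_n -> R, [/\ forall i, 0 <= l i,
        bx = \sum_i l i *: a' i & bt = \sum_i l i * s' i]).
  move=> [l [l0 E1 E2]]; apply: Hn.
  exists (fun i => if unlift ord0 i is Some j then l j else 0); split.
  - by move=> i; case: (unliftP ord0 i) => [j _|_].
  - by rewrite big_ord_recl unlift_none scale0r add0r E1; apply: eq_bigr => i _; rewrite liftK.
  - by rewrite big_ord_recl unlift_none mul0r add0r E2; apply: eq_bigr => i _; rewrite liftK.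
have [c [g [Hc Hb]]] := IH a' s' bx bt Hn'.
pose beta := prv c g (a ord0) (s ord0).
have [beta_le0|beta_gt0] := lerP beta 0.
  exists c, g; split => // i.
  by case: (unliftP ord0 i) => [j ->|->] //; apply: Hc.
pose p i := prv c g (a' i) (s' i).
pose pb := prv c g bx bt.
pose a'' i := beta *: a' i - p i *: a ord0.
pose s'' i := beta * s' i - p i * s ord0.
pose bx'' := beta *: bx - pb *: a ord0.
pose bt'' := beta * bt - pb * s ord0.
have Hn'' : ~ (exists l : 'I_n -> R, [/\ forall i, 0 <= l i,
        bx'' = \sum_i l i *: a'' i & bt'' = \sum_i l i * s'' i]).
  move=> [l [l0 E1 E2]]; apply: Hn.
  pose kappa := (pb - \sum_i l i * p i) / beta.
  have kappa0 : 0 <= kappa.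
    apply: divr_ge0; last exact: ltW.
    have S : \sum_i l i * p i <= \sum_(i < n) (0:R).
      by apply: ler_sum => i _; rewrite mulr_ge0_le0 //; exact: Hc.
    rewrite big1_eq in S.
    rewrite subr_ge0; apply: (le_trans S); exact: ltW.
  exists (fun i => if unlift ord0 i is Some j then l j else kappa); split.
  - by move=> i; case: (unliftP ord0 i) => [j _|_].
  - rewrite big_ord_recl unlift_none.
    under eq_bigr do rewrite liftK.
    have E : bx'' = beta *: \sum_i l i *: a' i - (\sum_i l i * p i) *: a ord0.
      rewrite E1 /a'' scaler_sumr scaler_suml -sumrB; apply: eq_bigr => i _.
      by rewrite scalerBr !scalerA mulrC.
    move: E; rewrite /bx'' => /(congr1 (fun z => beta^-1 *: (z + pb *: a ord0))).
    rewrite addrNK scalerA mulVf ?gt_eqF // scale1r => ->.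
    rewrite /kappa scalerDr scalerBr !scalerA mulVf ?gt_eqF // scale1r.
    rewrite mulrBl scalerBl [pb / _]mulrC [(\sum_i _) / _]mulrC.
    by rewrite [RHS]addrC addrAC -addrA.
  - rewrite big_ord_recl unlift_none.
    under eq_bigr do rewrite liftK.
    have E : bt'' = beta * \sum_i l i * s' i - (\sum_i l i * p i) * s ord0.
      rewrite E2 /s'' mulr_sumr mulr_suml -sumrB; apply: eq_bigr => i _.
      ring.
    rewrite /kappa.
    have -> : bt = beta^-1 * (bt'' + pb * s ord0).
      by rewrite /bt'' addrNK mulrA mulVf ?gt_eqF // mul1r.
    rewrite E; field; by rewrite gt_eqF.
have [c' [g' [Hc' Hb']]] := IH a'' s'' bx'' bt'' Hn''.
pose k := prv c' g' (a ord0) (s ord0) / beta.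
exists (c' - k *: c), (g' - k * g); split.
  move=> i; rewrite prv_combl.
  case: (unliftP ord0 i) => [j ->|->].
    have := Hc' j; rewrite /a'' /s'' prv_comb -/(a' j) -/(s' j).
    rewrite /k => H.
    have -> : prv c' g' (a' j) (s' j) - prv c' g' (a ord0) (s ord0) / beta *
      prv c g (a' j) (s' j) = (beta * prv c' g' (a' j) (s' j) -
      p j * prv c' g' (a ord0) (s ord0)) / beta.
      by rewrite /p; field; by rewrite gt_eqF.
    by apply: mulr_le0_ge0 => //; rewrite invr_ge0 ltW.
  by rewrite /k -/beta mulrAC -mulrA divff ?gt_eqF // mulr1 subrr.
rewrite prv_combl.
have := Hb'; rewrite /bx'' /bt'' prv_comb => H.
have -> : prv c' g' bx bt - k * prv c g bx bt = (beta * prv c' g' bx bt -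
      pb * prv c' g' (a ord0) (s ord0)) / beta.
  by rewrite /k /pb; field; by rewrite gt_eqF.
by apply: divr_gt0.
Qed.

Lemma separate (V : seq pt) (x : pt) : ~ conv V x ->
  exists c : pt, forall i : 'I_(size V), dotv c V`_i < dotv c x.
Proof.
move=> Hx.
have [|c [g [H1 H2]]] := @farkas (size V) (fun i => V`_i) (fun _ => 1) x 1.
  move=> [l [l0 E1 E2]]; apply: Hx; exists l; split => //.
  by rewrite E2; apply: eq_bigr => i _; rewrite mulr1.
exists c => i; have := H1 i; move: H2; rewrite /prv mulr1 => H2 H3.
lra.
Qed.
End Farkas.
Section Basic.
Variable R : realType.

Lemma pos_neq0 (x : R) : 0 < x -> x != 0.
Proof. by move=> h; rewrite gt_eqF. Qed.

Lemma ex_argmax n (P : pred 'I_n) (f : 'I_n -> R) i0 : P i0 ->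
  exists i, P i /\ forall j, P j -> f j <= f i.
Proof.
move=> Pi0; case: (arg_maxP f Pi0) => i Pi Hi; exists i; split => //.
Qed.

Lemma small_eps n (f : 'I_n -> R) : (forall j, 0 < f j) ->
  exists e, 0 < e /\ forall j, e <= f j.
Proof.
move=> fp; exists (1 + \sum_j (f j)^-1)^-1.
have S0 : 0 <= \sum_j (f j)^-1 by apply: sumr_ge0 => j _; rewrite invr_ge0 ltW.
have S1 : 0 < 1 + \sum_j (f j)^-1 by apply: ltr_wpDr.
split; first by rewrite invr_gt0.
move=> j; rewrite -[f j]invrK lef_pV2 ?posrE ?invr_gt0 //.
rewrite (bigD1 j) //= addrCA lerDl; apply: addr_ge0 => //.
by apply: sumr_ge0 => k _; rewrite invr_ge0 ltW.
Qed.

Lemma comb_le n (w f : 'I_n -> R) m : (forall i, 0 <= w i) -> \sum_i w i = 1 ->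
  (forall i, w i != 0 -> f i <= m) -> \sum_i w i * f i <= m.
Proof.
move=> w0 w1 H.
have -> : m = \sum_i w i * m by rewrite -mulr_suml w1 mul1r.
apply: ler_sum => i _; have [->|wi] := eqVneq (w i) 0; first by rewrite !mul0r.
by apply: ler_wpM2l => //; apply: H.
Qed.

Lemma comb_eq n (w f : 'I_n -> R) m : \sum_i w i = 1 ->
  (forall i, w i != 0 -> f i = m) -> \sum_i w i * f i = m.
Proof.
move=> w1 H.
have -> : m = \sum_i w i * m by rewrite -mulr_suml w1 mul1r.
apply: eq_bigr => i _; have [->|wi] := eqVneq (w i) 0; first by rewrite !mul0r.
by rewrite H.
Qed.

Lemma comb_supp n (w f : 'I_n -> R) m : (forall i, 0 <= w i) -> \sum_i w i = 1 ->
  (forall i, w i != 0 -> f i <= m) -> \sum_i w i * f i = m ->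
  forall i, w i != 0 -> f i = m.
Proof.
move=> w0 w1 H E.
have E0 : \sum_i w i * (m - f i) = 0.
  under eq_bigr do rewrite mulrBr.
  by rewrite sumrB E -mulr_suml w1 mul1r subrr.
have T : forall i, true -> 0 <= w i * (m - f i).
  move=> i _; have [->|wi] := eqVneq (w i) 0; first by rewrite mul0r.
  by rewrite mulr_ge0 // subr_ge0 H.
move=> i wi; have := @psumr_eq0P _ _ _ _ T E0 i isT.
by move/eqP; rewrite mulf_eq0 (negbTE wi) /= subr_eq0 => /eqP.
Qed.

Lemma comb_const n (w : 'I_n -> R) d (F : 'I_n -> 'rV[R]_d) x : \sum_i w i = 1 ->
  (forall i, w i != 0 -> F i = x) -> \sum_i w i *: F i = x.
Proof.
move=> w1 H.
have -> : x = \sum_i w i *: x by rewrite -scaler_suml w1 scale1r.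
apply: eq_bigr => i _; have [->|wi] := eqVneq (w i) 0; first by rewrite !scale0r.
by rewrite H.
Qed.
End Basic.
Section Poly.
Variables (R : realType) (d : nat) (V : seq 'rV[R]_d).
Notation pt := 'rV[R]_d.
Notation n := (size V).
Notation P := (conv V).

Lemma memV (i : 'I_n) : P V`_i.
Proof.
exists (fun j => (j == i)%:R); split.
- by move=> j; rewrite ler0n.
- by rewrite (bigD1 i) //= eqxx big1 ?addr0 // => j /negbTE ->.
- rewrite (bigD1 i) //= eqxx scale1r big1 ?addr0 // => j /negbTE ->.
  by rewrite scale0r.
Qed.

Lemma conv_le x c m : P x -> (forall j : 'I_n, dotv c V`_j <= m) -> dotv c x <= m.
Proof.
move=> [w [w0 w1 ->]] H; rewrite dotv_comb; apply: comb_le => // i _; exact: H.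
Qed.

Lemma face_char c x :
  face_max P c x <-> P x /\ forall j : 'I_n, dotv c V`_j <= dotv c x.
Proof.
split => [[Px H]|[Px H]]; split => //.
- by move=> j; apply: H; exact: memV.
- by move=> y Py; apply: conv_le.
Qed.

Definition Sf (c : pt) : {set 'I_n} :=
  [set i : 'I_n | [forall j : 'I_n, dotv c V`_j <= dotv c V`_i]].

Lemma SfP c (i : 'I_n) : i \in Sf c <-> face_max P c V`_i.
Proof.
rewrite face_char inE; split.
- by move/forallP => H; split => //; exact: memV.
- by move=> [_ H]; apply/forallP.
Qed.

Lemma face_supp c x (w : 'I_n -> R) : face_max P c x -> (forall i, 0 <= w i) ->
  \sum_i w i = 1 -> x = \sum_i w i *: V`_i -> forall i, w i != 0 -> i \in Sf c.
Proof.
move=> /face_char [Px H] w0 w1 xE i wi.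
have E : \sum_i w i * dotv c V`_i = dotv c x by rewrite xE dotv_comb.
have := comb_supp w0 w1 (fun j _ => H j) E wi => Ei.
rewrite inE; apply/forallP => j; rewrite Ei; exact: H.
Qed.

Lemma face_maxS c a y : face_max P c y ->
  (forall i, i \in Sf c -> dotv a V`_i <= dotv a y) ->
  face_max (face_max P c) a y.
Proof.
move=> Fy H; split => // z Fz.
have [w [w0 w1 zE]] := Fz.1.
rewrite zE dotv_comb; apply: comb_le => // i wi; apply: H.
by apply: (face_supp Fz w0 w1 zE).
Qed.

Lemma face_ne c : (0 < n)%N -> exists x, face_max P c x.
Proof.
move=> n0; have [i [_ Hi]] := @ex_argmax _ n predT (fun j => dotv c V`_j)
   (Ordinal n0) isT.
by exists V`_i; apply/face_char; split; [exact: memV| move=> j; exact: Hi].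
Qed.

Lemma eps_lemma c a : (0 < n)%N -> exists e, 0 < e /\
  face_max P (c + e *: a) = face_max (face_max P c) a.
Proof.
move=> n0.
have [i0 [_ Hi0]] := @ex_argmax _ n predT (fun j => dotv c V`_j) (Ordinal n0) isT.
have i0S : i0 \in Sf c by rewrite inE; apply/forallP => j; exact: Hi0.
have [i1 [i1S Hi1]] := @ex_argmax _ n (mem (Sf c)) (fun j => dotv a V`_j) i0 i0S.
pose M := dotv c V`_i0.
have ScE : forall j, j \in Sf c -> dotv c V`_j = M.
  move=> j; rewrite inE => /forallP Hj; apply/eqP; rewrite eq_le Hi0 //=.
  exact: Hj.
have notS : forall j, j \notin Sf c -> dotv c V`_j < M.
  move=> j jS; rewrite lt_neqAle Hi0 // andbT; apply: contra jS => /eqP E.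
  by rewrite inE; apply/forallP => k; rewrite E; exact: Hi0.
pose B := 1 + 2 * \sum_(j < n) `|dotv a V`_j|.
have S0 : 0 <= \sum_(j < n) `|dotv a V`_j| by apply: sumr_ge0 => j _.
have B0 : 0 < B by rewrite /B; apply: ltr_wpDr => //; apply: mulr_ge0.
have fpos : forall j : 'I_n, 0 < (if j \in Sf c then 1 else (M - dotv c V`_j) / B).
  move=> j; case: ifPn => jS; first exact: ltr01.
  by apply: divr_gt0 => //; rewrite subr_gt0; exact: notS.
have [e [e0 He]] := small_eps fpos.
exists e; split => //.
have absle : forall j k : 'I_n, dotv a V`_j - dotv a V`_k < B.
  move=> j k.
  have Hj : `|dotv a V`_j| <= \sum_(j < n) `|dotv a V`_j|.
    by rewrite (bigD1 j) //= lerDl sumr_ge0.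
  have Hk : `|dotv a V`_k| <= \sum_(j < n) `|dotv a V`_j|.
    by rewrite (bigD1 k) //= lerDl sumr_ge0.
  have := ler_norm (dotv a V`_j); have := ler_norm (- dotv a V`_k).
  rewrite normrN.
  rewrite /B; lra.
pose ce := c + e *: a.
have ceE : forall y, dotv ce y = dotv c y + e * dotv a y.
  by move=> y; rewrite /ce dotvDl dotvZl.
have strict : forall j : 'I_n, j \notin Sf c -> dotv ce V`_j < dotv ce V`_i1.
  move=> j jS; rewrite !ceE (ScE _ i1S).
  have := He j; rewrite (negbTE jS) => Hej.
  have h1 : e * B <= M - dotv c V`_j by rewrite -ler_pdivlMr.
  have h2 : e * (dotv a V`_j - dotv a V`_i1) < e * B by rewrite ltr_pM2l.
  move: h2; rewrite mulrBr; lra.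
have weak : forall j : 'I_n, dotv ce V`_j <= dotv ce V`_i1.
  move=> j; have [jS|jS] := boolP (j \in Sf c); last exact: ltW (strict j jS).
  rewrite !ceE (ScE _ i1S) (ScE _ jS) lerD2l.
  by apply: ler_wpM2l; [exact: ltW | exact: (Hi1 j jS)].
apply/seteqP; split => x.
  move=> Hx; have [Px H] := (face_char ce x).1 Hx.
  have [w [w0 w1 xE]] := Px.
  have hsupp : forall j, w j != 0 -> j \in Sf c /\ dotv a V`_j = dotv a V`_i1.
    move=> j wj; have := face_supp Hx w0 w1 xE wj; rewrite inE => /forallP Hj.
    have Ej : dotv ce V`_j = dotv ce V`_i1 by apply/eqP; rewrite eq_le weak Hj.
    have jS : j \in Sf c.
      apply: contraT => jS; have := strict j jS; rewrite Ej ltxx //.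
    split => //; move: Ej; rewrite !ceE (ScE _ i1S) (ScE _ jS) => /addrI.
    have e0' : e != 0 by rewrite gt_eqF.
    by move/(mulfI e0').
  have cx : dotv c x = M.
    rewrite xE dotv_comb; apply: comb_eq => // j wj.
    by apply: ScE; case: (hsupp j wj).
  have ax : dotv a x = dotv a V`_i1.
    rewrite xE dotv_comb; apply: comb_eq => // j wj.
    by case: (hsupp j wj).
  have Fx : face_max P c x.
    by apply/face_char; split => // k; rewrite cx; exact: Hi0.
  by apply: face_maxS => // i iS; rewrite ax; exact: Hi1.
move=> [Fx Hax]; have [Px Hc] := (face_char c x).1 Fx.
have ai1 : dotv a V`_i1 <= dotv a x by apply: Hax; apply/SfP.
apply/face_char; split => // j; apply: (le_trans (weak j)).
rewrite !ceE; apply: lerD; first exact: Hc.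
by apply: ler_wpM2l => //; exact: ltW.
Qed.
End Poly.
Section Poly2.
Variables (R : realType) (d : nat).
Notation pt := 'rV[R]_d.

Lemma vert_mem (Q : set pt) g u : face_max Q g = [set u] -> Q u.
Proof. by move=> E; have [] : face_max Q g u by rewrite E. Qed.

Lemma vert_lt (Q : set pt) g u y : face_max Q g = [set u] -> Q y -> y <> u ->
  dotv g y < dotv g u.
Proof.
move=> E Qy yu; have [Qu Hu] : face_max Q g u by rewrite E.
rewrite ltNge; apply/negP => H; apply: yu.
have : face_max Q g y.
  by split => // z Qz; apply: (le_trans (Hu z Qz)).
by rewrite E.
Qed.

Variable V : seq pt.
Notation n := (size V).
Notation P := (conv V).

Lemma conv_n0 x : P x -> (0 < n)%N.
Proof.
move=> [w [_ w1 _]]; rewrite lt0n; apply/negP => /eqP n0.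
have : \sum_i w i = 0 by apply: big1 => i _; have := ltn_ord i; rewrite {2}n0.
by rewrite w1 => /eqP; rewrite oner_eq0.
Qed.

Lemma vert_V g u : face_max P g = [set u] -> exists i : 'I_n, V`_i = u.
Proof.
move=> E; have n0 := conv_n0 (vert_mem E).
have [i [_ Hi]] := @ex_argmax _ n predT (fun j => dotv g V`_j) (Ordinal n0) isT.
exists i; have : face_max P g V`_i.
  by apply/face_char; split; [exact: memV | move=> j; exact: Hi].
by rewrite E.
Qed.

Lemma vertex_in_face c : (0 < n)%N -> exists u, (exists g, face_max P g = [set u])
  /\ face_max P c u.
Proof.
move=> n0.
have [i0 [_ Hi0]] := @ex_argmax _ n predT (fun j => dotv c V`_j) (Ordinal n0) isT.
have i0S : i0 \in Sf V c by rewrite inE; apply/forallP => j; exact: Hi0.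
have [k [kS Hk]] := @ex_argmax _ n (mem (Sf V c)) (fun j => dotv V`_j V`_j) i0 i0S.
set x := V`_k.
have Fx : face_max P c x by apply/SfP.
have le_x : forall i, i \in Sf V c -> dotv x V`_i <= dotv x x.
  move=> i iS; have := Hk i iS; have := dotv_ge0 (x - V`_i).
  rewrite dotv_subsq -/x; lra.
have [e [e0 Ee]] := @eps_lemma _ _ V c x n0.
exists x; split => //; exists (c + e *: x); rewrite Ee.
apply/seteqP; split => y; last first.
  by move=> ->; apply: face_maxS.
move=> [Fy Hy].
have [w [w0 w1 yE]] := Fy.1.
have supp := face_supp Fy w0 w1 yE.
have E : \sum_i w i * dotv x V`_i = dotv x x.
  apply/eqP; rewrite eq_le; apply/andP; split.
    by apply: comb_le => // i wi; apply: le_x; exact: supp.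
  by rewrite -dotv_comb -yE; apply: Hy.
have := comb_supp w0 w1 (fun i wi => le_x i (supp i wi)) E => Ei.
rewrite /= yE; apply: comb_const => // i wi.
have := Ei i wi => Exi.
have := Hk i (supp i wi); rewrite -/x => Hki.
have H0 := dotv_ge0 (x - V`_i).
have : dotv (x - V`_i) (x - V`_i) = 0.
  apply/eqP; rewrite eq_le H0 andbT; rewrite dotv_subsq Exi; lra.
by move/dotv_eq0/eqP; rewrite subr_eq0 => /eqP.
Qed.
End Poly2.
Section Fan.
Variables (R : realType) (d : nat).
Notation pt := 'rV[R]_d.

Lemma nc_incl (P P' : set pt) c : normal_fan P = normal_fan P' ->
  normal_cone P' (face_max P' c) `<=` normal_cone P (face_max P c).
Proof.
move=> hf g Hg.
have : normal_fan P (normal_cone P (face_max P c)).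
  by exists (face_max P c); split => //; exists c.
rewrite hf => -[F' [[c' EF] EN]]; rewrite EN /= EF.
have : normal_cone P (face_max P c) c by [].
rewrite EN /= EF => H1 z Hz.
exact: Hg (H1 z Hz).
Qed.

Lemma FE (P P' : set pt) a b : normal_fan P = normal_fan P' ->
  face_max P a `<=` face_max P b <-> face_max P' a `<=` face_max P' b.
Proof.
move=> hf.
have eqN : normal_cone P (face_max P a) = normal_cone P' (face_max P' a).
  apply/seteqP; split; first exact: nc_incl (esym hf).
  exact: nc_incl.
split => H.
  have : normal_cone P (face_max P a) b by [].
  by rewrite eqN.
have : normal_cone P' (face_max P' a) b by [].
by rewrite -eqN.
Qed.

Lemma FEeq (P P' : set pt) a b : normal_fan P = normal_fan P' ->
  face_max P a = face_max P b -> face_max P' a = face_max P' b.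
Proof.
move=> hf E; apply/seteqP; split; apply/(FE _ _ hf); by rewrite E.
Qed.

Lemma face_single (u h : pt) : face_max [set u] h = [set u].
Proof.
apply/seteqP; split => x; first by case.
by move=> ->; split => // y ->.
Qed.

Lemma conv_incl (V V' : seq pt) :
  (forall u g, face_max (conv V) g = [set u] -> conv V' u) ->
  conv V `<=` conv V'.
Proof.
move=> Hv x Px; apply: contrapT => nx.
have [c Hc] := separate nx.
have [u [[g Eg] Fu]] := vertex_in_face c (conv_n0 Px).
have P'u := Hv _ _ Eg.
have n0' := conv_n0 P'u.
have [j [_ Hj]] := @ex_argmax _ _ predT (fun j => dotv c V'`_j) (Ordinal n0') isT.
have h1 : dotv c u <= dotv c V'`_j by apply: (conv_le P'u) => k; exact: Hj.
have h2 : dotv c x <= dotv c u by apply: Fu.2.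
have := Hc j; lra.
Qed.

Lemma single_corr (V V' : seq pt) g u :
  normal_fan (conv V) = normal_fan (conv V') -> (0 < size V')%N ->
  face_max (conv V) g = [set u] -> exists u', face_max (conv V') g = [set u'].
Proof.
move=> hf n0' Eg.
have n0 := conv_n0 (vert_mem Eg).
have [y1 Fy1] := face_ne g n0'.
exists y1; apply/seteqP; split => y2; last by move=> ->.
move=> Fy2; apply/eqP; rewrite -subr_eq0; apply/eqP; apply: dotv_eq0.
have [e [e0 Ee]] := @eps_lemma _ _ V' g (y1 - y2) n0'.
have s1 : face_max (conv V') (g + e *: (y1 - y2)) `<=` face_max (conv V') g.
  by rewrite Ee => z [].
have s2 := (FE _ _ hf).2 s1.
have [z0 Fz0] := face_ne (g + e *: (y1 - y2)) n0.
have z0u : z0 = u by have := s2 _ Fz0; rewrite Eg.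
have s3 : face_max (conv V) g `<=` face_max (conv V) (g + e *: (y1 - y2)).
  by rewrite Eg => z ->; rewrite -z0u.
have s4 := (FE _ _ hf).1 s3.
have := s4 _ Fy2; rewrite Ee => -[_ H].
have := H _ Fy1; rewrite -subr_ge0 -dotvBr => H1.
have E1 : dotv (y1 - y2) (y2 - y1) = - dotv (y2 - y1) (y2 - y1).
  by rewrite -dotvNl opprB.
have := dotv_ge0 (y2 - y1); lra.
Qed.
End Fan.
Section Edge.
Variables (R : realType) (d : nat) (V : seq 'rV[R]_d).
Notation pt := 'rV[R]_d.
Notation n := (size V).
Notation P := (conv V).

Lemma ex_argmin n' (Pr : pred 'I_n') (f : 'I_n' -> R) i0 : Pr i0 ->
  exists i, Pr i /\ forall j, Pr j -> f i <= f j.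
Proof.
move=> Pi0; have [i [Pi Hi]] := @ex_argmax _ n' Pr (fun j => - f j) i0 Pi0.
by exists i; split => // j Pj; rewrite -lerN2; exact: Hi.
Qed.

Lemma open_vertex g u h : face_max P g = [set u] ->
  exists del, 0 < del /\ face_max P (g + del *: h) = [set u].
Proof.
move=> E; have n0 := conv_n0 (vert_mem E).
have [e [e0 Ee]] := @eps_lemma _ _ V g h n0.
by exists e; split => //; rewrite Ee E face_single.
Qed.

Definition edge_goal (c0 u : pt) := exists c y, [/\ face_max P c u, face_max P c y,
  dotv c0 u < dotv c0 y & forall x, face_max P c x -> exists t : R, x = u + t *: (y - u)].

Lemma edge_face c0 g u : face_max P g = [set u] ->
  (exists x, P x /\ dotv c0 u < dotv c0 x) -> edge_goal c0 u.
Proof.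
move=> Eg [x0 [Px0 hx0]].
have n0 := conv_n0 Px0.
have uP : P u := vert_mem Eg.
pose Good c := face_max P c u /\ exists i, i \in Sf V c /\ dotv c0 u < dotv c0 V`_i.
suff main : forall N c, (#|Sf V c| < N)%N -> Good c -> edge_goal c0 u.
  apply: (main #|Sf V 0|.+1 0) => //; split.
    by apply/face_char; split => // j; rewrite !dotv0l.
  apply: contrapT => nE.
  have : dotv c0 x0 <= dotv c0 u.
    apply: (conv_le Px0) => j; rewrite leNgt; apply/negP => hj; apply: nE.
    by exists j; split => //; rewrite inE; apply/forallP => k; rewrite !dotv0l.
  lra.
elim=> [//|N IH] c cN [Fu [i2 [i2S hi2]]].
case: (pselect (edge_goal c0 u)) => [//|nG].
have den_pos : forall i : 'I_n, dotv c0 u < dotv c0 V`_i -> 0 < dotv c0 (V`_i - u).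
  by move=> i hi; rewrite dotvBr subr_gt0.
have ne_u : forall i : 'I_n, dotv c0 u < dotv c0 V`_i -> V`_i <> u.
  by move=> i hi E; move: hi; rewrite E ltxx.
have PropA : forall g', face_max P g' = [set u] -> exists s : R, forall i,
    i \in Sf V c -> V`_i <> u -> dotv c0 u < dotv c0 V`_i /\
    dotv g' (u - V`_i) = s * dotv c0 (V`_i - u).
  move=> g' Eg'.
  pose H := [pred i : 'I_n | (i \in Sf V c) && (dotv c0 u < dotv c0 V`_i)].
  have Hi2 : H i2 by rewrite /H /= i2S hi2.
  pose r i := dotv g' (u - V`_i) / dotv c0 (V`_i - u).
  have [k [Hk kmin]] := ex_argmin r Hi2.
  move: (Hk); rewrite /H /= => /andP [kS hk].
  have num_pos : forall i : 'I_n, V`_i <> u -> 0 < dotv g' (u - V`_i).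
    by move=> i iu; rewrite dotvBr subr_gt0; apply: (vert_lt Eg' (memV _) iu).
  pose s := r k.
  have s0 : 0 < s by apply: divr_gt0; [apply/num_pos/ne_u | apply: den_pos].
  pose a := g' + s *: c0.
  have aE : forall y, dotv a y = dotv g' y + s * dotv c0 y.
    by move=> y; rewrite /a dotvDl dotvZl.
  have ai : forall i, i \in Sf V c -> dotv a V`_i <= dotv a u.
    move=> i iS; rewrite !aE.
    have [E|iu] := pselect (V`_i = u); first by rewrite E.
    have [hi|hi] := lerP (dotv c0 V`_i) (dotv c0 u).
      have := vert_lt Eg' (memV i) iu.
      have : s * dotv c0 V`_i <= s * dotv c0 u by apply: ler_wpM2l => //; exact: ltW.
      lra.
    have Hi : H i by rewrite /H /= iS hi.
    have := kmin i Hi; rewrite -/s /r ler_pdivlMr ?den_pos // !dotvBr mulrBr.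
    lra.
  have ak : dotv a V`_k = dotv a u.
    have : s * dotv c0 (V`_k - u) = dotv g' (u - V`_k).
      by rewrite /s /r divfK // gt_eqF ?den_pos.
    rewrite !dotvBr !aE mulrBr; lra.
  have [ep [ep0 Ee]] := @eps_lemma _ _ V c a n0.
  pose c' := c + ep *: a.
  have Fu' : face_max P c' u by rewrite /c' Ee; apply: face_maxS.
  have Fk' : face_max P c' V`_k.
    rewrite /c' Ee; apply: face_maxS; first exact/SfP.
    by move=> i iS; rewrite ak; exact: ai.
  have sub : Sf V c' \subset Sf V c.
    by apply/fintype.subsetP => i /SfP; rewrite /c' Ee => -[Fi _]; exact/SfP.
  have eqS : Sf V c' = Sf V c.
    apply/eqP; rewrite eqEcard sub /= leqNgt; apply/negP => hlt.
    apply: nG; apply: (IH c'); first by rewrite -ltnS (leq_trans _ cN) // ltnS.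
    by split => //; exists k; split => //; exact/SfP.
  exists s => i iS iu.
  have Fi : face_max P c' V`_i by apply/SfP; rewrite eqS.
  move: Fi; rewrite /c' Ee => -[_ Hi].
  have hau := Hi u Fu.
  have hai := ai i iS.
  have eq_a : dotv a V`_i = dotv a u by apply/eqP; rewrite eq_le hai.
  have hi : dotv c0 u < dotv c0 V`_i.
    rewrite ltNge; apply/negP => hle.
    have := vert_lt Eg' (memV i) iu.
    have : s * dotv c0 V`_i <= s * dotv c0 u by apply: ler_wpM2l => //; exact: ltW.
    move: eq_a; rewrite !aE; lra.
  by split => //; move: eq_a; rewrite !aE !dotvBr mulrBr; lra.
pose e := V`_i2 - u.
have i2u : V`_i2 <> u by apply: ne_u.
have al2 : 0 < dotv c0 e by apply: den_pos.
have coll : forall i, i \in Sf V c -> V`_i <> u ->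
    V`_i = u + (dotv c0 (V`_i - u) / dotv c0 e) *: e.
  move=> i iS iu.
  pose z := dotv c0 e *: (V`_i - u) - dotv c0 (V`_i - u) *: e.
  have zperp : forall g', face_max P g' = [set u] -> dotv g' z = 0.
    move=> g' Eg'; have [s' Hs'] := PropA g' Eg'.
    have [_ E1] := Hs' i iS iu; have [_ E2] := Hs' i2 i2S i2u.
    rewrite /z dotvBr !dotvZr.
    have F1 : dotv g' (V`_i - u) = - dotv g' (u - V`_i) by rewrite -dotvNr opprB.
    have F2 : dotv g' e = - dotv g' (u - V`_i2) by rewrite -dotvNr opprB.
    rewrite F1 F2 E1 E2 /e; ring.
  have hz : forall h, dotv h z = 0.
    move=> h; have [del [del0 Edel]] := open_vertex h Eg.
    have := zperp _ Edel; rewrite dotvDl dotvZl (zperp _ Eg) add0r => /eqP.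
    by rewrite mulf_eq0 gt_eqF //= => /eqP.
  have z0 : z = 0 by apply: dotv_eq0; apply: hz.
  have E : dotv c0 e *: (V`_i - u) = dotv c0 (V`_i - u) *: e.
    by apply/eqP; rewrite -subr_eq0; apply/eqP; exact: z0.
  have E' : V`_i - u = (dotv c0 (V`_i - u) / dotv c0 e) *: e.
    by rewrite mulrC -scalerA -E scalerA mulVf ?gt_eqF // scale1r.
  by rewrite -E' addrC subrK.
exists c, V`_i2; split => //; first exact/SfP.
move=> x Fx; have [w [w0 w1 xE]] := Fx.1.
have supp := face_supp Fx w0 w1 xE.
pose t i := if V`_i == u then 0 else dotv c0 (V`_i - u) / dotv c0 e.
exists (\sum_i w i * t i).
have Vt : forall i, w i != 0 -> V`_i = u + t i *: e.
  move=> i wi; rewrite /t; case: eqP => [->|iu]; first by rewrite scale0r addr0.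
  exact: coll (supp i wi) iu.
rewrite xE.
transitivity (\sum_i w i *: (u + t i *: e)).
  apply: eq_bigr => i _; have [->|wi] := eqVneq (w i) 0; first by rewrite !scale0r.
  by rewrite -Vt.
rewrite (eq_bigr _ (fun i _ => scalerDr _ _ _)) big_split /= -scaler_suml w1 scale1r.
by rewrite scaler_suml; congr (_ + _); apply: eq_bigr => i _; rewrite scalerA.
Qed.
End Edge.
Section Main.
Variables (R : realType) (d : nat) (V V' : seq 'rV[R]_d).
Notation pt := 'rV[R]_d.
Notation n := (size V).
Notation P := (conv V).
Notation P' := (conv V').
Hypothesis hf : normal_fan P = normal_fan P'.
Hypothesis insc : inscribed0 P.
Hypothesis insc' : inscribed0 P'.
Variables (c0 v : pt).
Hypothesis E0 : face_max P c0 = [set v].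
Hypothesis corr_v : forall g, face_max P g = [set v] -> face_max P' g = [set v].
Hypothesis n0' : (0 < size V')%N.

Lemma main_corr g u : face_max P g = [set u] -> face_max P' g = [set u].
Proof.
suff: forall (N : nat) g u, (#|[set i : 'I_n | (dotv c0 u < dotv c0 V`_i)%R]%SET| < N)%N ->
    face_max P g = [set u] -> face_max P' g = [set u].
  by move=> H; apply: H.
elim=> [//|N IH] {}g {}u cN Eg.
have [uv|uv] := pselect (u = v); first by subst u; exact: corr_v.
have uP := vert_mem Eg.
have n0 := conv_n0 uP.
have hv : dotv c0 u < dotv c0 v := vert_lt E0 uP uv.
have [c [y [Fu Fy hy coll]]] := edge_face Eg (ex_intro _ v (conj (vert_mem E0) hv)).
set e := y - u.
have ce0 : 0 < dotv c0 e by rewrite /e dotvBr subr_gt0.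
have ee0 : 0 < dotv e e.
  rewrite lt_def dotv_ge0 andbT; apply/eqP => /dotv_eq0 E.
  by move: ce0; rewrite E dotv0r ltxx.
have [ep [ep0 Eep]] := @eps_lemma _ _ V c c0 n0.
set gw := c + ep *: c0.
have [w Fw] := face_ne gw n0.
have Ew : face_max P gw = [set w].
  apply/seteqP; split => z; last by move=> ->.
  move=> Fz; move: (Fz) (Fw); rewrite /gw Eep => -[Gz Hz] [Gw Hw].
  have cz : dotv c0 z = dotv c0 w by apply/eqP; rewrite eq_le Hz // Hw.
  have [tz Ez] := coll z Gz; have [tw Etw] := coll w Gw.
  move: cz; rewrite Ez Etw !dotvDr !dotvZr -/e => /addrI /(mulIf (pos_neq0 ce0)) ->.
  by [].
have [Gw Hw] : face_max (face_max P c) c0 w by rewrite -Eep -/gw Ew.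
have hw : dotv c0 u < dotv c0 w by apply: (lt_le_trans hy); apply: Hw.
have [iw Viw] := vert_V Ew.
have IHw : face_max P' gw = [set w].
  apply: IH Ew; rewrite -ltnS; apply: leq_trans cN; rewrite ltnS.
  apply: proper_card; apply/properP; split.
    apply/fintype.subsetP => i; rewrite !inE => hi; exact: lt_trans hi.
  by exists iw; rewrite !inE Viw ?ltxx.
have [u' Eu'] := single_corr hf n0' Eg.
have s1 : face_max P g `<=` face_max P c by rewrite Eg => z ->.
have s2 : face_max P gw `<=` face_max P c by rewrite Ew => z ->.
have Fu' : face_max P' c u'.
  by apply: ((FE _ _ hf).1 s1); rewrite Eu'.
have Fw' : face_max P' c w.
  by apply: ((FE _ _ hf).1 s2); rewrite IHw.
have perp : forall h, dotv h e = 0 -> dotv h (w - u') = 0.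
  move=> h he.
  have [eh [eh0 Eeh]] := @eps_lemma _ _ V c h n0.
  have Gh : face_max P (c + eh *: h) = face_max P c.
    rewrite Eeh; apply/seteqP; split => z; first by case.
    move=> Gz; split => // z' Gz'.
    have [t1 E1] := coll z Gz; have [t2 E2] := coll z' Gz'.
    by rewrite E1 E2 !dotvDr !dotvZr -/e he !mulr0.
  have Gh' := FEeq hf Gh.
  move: (Fu') (Fw'); rewrite -Gh' => -[_ H1] [_ H2].
  move: (Fu') (Fw') => -[Pu' H3] [Pw H4].
  have a1 := H1 _ Pw; have a2 := H2 _ Pu'; have a3 := H3 _ Pw; have a4 := H4 _ Pu'.
  move: a1 a2; rewrite !dotvDl !dotvZl => a1 a2.
  have : eh * dotv h w = eh * dotv h u' by lra.
  move/(mulfI (pos_neq0 eh0)) => E; rewrite dotvBr E subrr //.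
pose lam := dotv (w - u') e / dotv e e.
pose hvv := (w - u') - lam *: e.
have hve : dotv hvv e = 0.
  by rewrite /hvv dotvBl dotvZl /lam divfK ?subrr // pos_neq0.
have hv0 : hvv = 0.
  apply: dotv_eq0; have p1 := perp hvv hve.
  transitivity (dotv hvv (w - u' - lam *: e)); first by [].
  by rewrite dotvBr dotvZr p1 hve mulr0 subr0.
have Eu'w : w - u' = lam *: e.
  by apply/eqP; rewrite -subr_eq0; apply/eqP; exact: hv0.
have [tw Etw] := coll w Gw; rewrite -/e in Etw.
have tw0 : 0 < tw.
  move: hw; rewrite Etw dotvDr dotvZr => hw'.
  have : 0 < tw * dotv c0 e by lra.
  by rewrite pmulr_lgt0.
have wu' : w <> u'.
  move=> E; have : face_max P' g = face_max P' gw by rewrite Eu' IHw E.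
  move/(FEeq (esym hf)); rewrite Eg Ew => Es.
  have : [set w] u by rewrite -Es.
  by move=> uw; move: hw; rewrite -uw ltxx.
have g1 : dotv g w < dotv g u' := vert_lt Eu' Fw'.1 wu'.
have wu : w <> u by move=> E; move: hw; rewrite E ltxx.
have g2 : dotv g w < dotv g u := vert_lt Eg Gw.1 wu.
have gE1 : dotv g w - dotv g u' = lam * dotv g e by rewrite -dotvBr Eu'w dotvZr.
have gE2 : dotv g w - dotv g u = tw * dotv g e.
  by rewrite Etw dotvDr dotvZr; ring.
have ge : dotv g e < 0.
  have : tw * dotv g e < 0 by lra.
  by rewrite pmulr_rlt0.
have lam0 : 0 < lam.
  rewrite ltNge; apply/negP => hl.
  have : 0 <= lam * dotv g e by apply: mulr_le0 => //; exact: ltW.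
  lra.
have [r Hr] := insc; have [r' Hr'] := insc'.
have nu : dotv u u = dotv w w.
  by rewrite (Hr u) ?(Hr w) //; [exists gw | exists g].
have nu' : dotv u' u' = dotv w w.
  by rewrite (Hr' u') ?(Hr' w) //; [exists gw | exists g].
have key : forall t, dotv (w - t *: e) (w - t *: e) =
    dotv w w - t * (2 * dotv w e - t * dotv e e).
  by move=> t; rewrite dotv_subsq !dotvZr dotvZl; ring.
have Eu : u = w - tw *: e by rewrite Etw addrK.
have Eu'2 : u' = w - lam *: e by rewrite -Eu'w opprB addrC subrK.
have k1 : tw * dotv e e = 2 * dotv w e.
  move: nu; rewrite {1 2}Eu key => /eqP; rewrite subr_eq addrC -subr_eq subrr.
  rewrite eq_sym mulf_eq0 (negbTE (pos_neq0 tw0)) /= subr_eq0 => /eqP; by [].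
have k2 : lam * dotv e e = 2 * dotv w e.
  move: nu'; rewrite {1 2}Eu'2 key => /eqP; rewrite subr_eq addrC -subr_eq subrr.
  rewrite eq_sym mulf_eq0 (negbTE (pos_neq0 lam0)) /= subr_eq0 => /eqP; by [].
have lt : lam = tw by apply: (mulIf (pos_neq0 ee0)); rewrite k1 k2.
by rewrite Eu' Eu'2 lt -Eu.
Qed.
End Main.
Theorem lemma2p2 (R : realType) (d : nat) (P P' : set 'rV[R]_d) (v : 'rV[R]_d) :
  is_polytope P -> is_polytope P' ->
  inscribed0 P -> inscribed0 P' ->
  normal_fan P = normal_fan P' ->
  is_vertex P v -> is_vertex P' v ->
  normal_cone P [set v] = normal_cone P' [set v] ->
  P = P'.
Proof.
move=> [V ->] [V' ->] insc insc' hf [c0 E0] [c0' E0'] hnc.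
have n0 := conv_n0 (vert_mem E0).
have n0' := conv_n0 (vert_mem E0').
have corr : forall (W W' : seq 'rV[R]_d),
    normal_fan (conv W) = normal_fan (conv W') -> (0 < size W')%N ->
    normal_cone (conv W) [set v] = normal_cone (conv W') [set v] ->
    forall g, face_max (conv W) g = [set v] -> face_max (conv W') g = [set v].
  move=> W W' hf' nW' hnc' g Eg.
  have : normal_cone (conv W) [set v] g by move=> z ->; rewrite Eg.
  rewrite hnc' => /= Hv.
  have [u' Eu'] := single_corr hf' nW' Eg.
  have : face_max (conv W') g v by apply: Hv.
  by rewrite Eu' => ->.
have m1 := main_corr hf insc insc' E0 (corr _ _ hf n0' hnc) n0'.
have m2 := main_corr (esym hf) insc' insc E0' (corr _ _ (esym hf) n0 (esym hnc)) n0.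
apply/seteqP; split; apply: conv_incl => u g Eg.
  exact: vert_mem (m1 _ _ Eg).
exact: vert_mem (m2 _ _ Eg).
Qed.
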